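(* Let $p,q,l,N\in\mathbb{Z}_{\geq 0}$, $s=p+q$, and let $M=(M_1,\dots,M_s)\in\mathrm{Sym}_N^{p}\times\mathrm{Alt}_N^{q}$. Suppose there is a subspace $V\subseteq\mathbb{C}^N$ of dimension $2^sl$ such that $M_1V+\dots+M_sV$ has dimension $s2^sl$. Then the Zariski closure of the orbit $\{(gM_1g^T,\dots,gM_sg^T):g\in\mathrm{GL}_N(\mathbb{C})\}$ contains a tuple $(M'_1,\dots,M'_s)\in\mathrm{Sym}_N^{p}\times\mathrm{Alt}_N^{q}$ such that for each $i$: (a) all entries $(M'_i)_{j,k}$ with $j,k>l$ are zero, and (b) the $N\times l$ matrix formed by the first $l$ columns of $M'_i$ has, in blocks of $l$ rows followed by a final block of $N-(s+1)l$ rows, first block $0_{l\times l}$, $(i+1)$-st block $\mathrm{Id}_l$, and all other blocks zero.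
   Context: $\mathrm{Sym}_N$ and $\mathrm{Alt}_N$ denote the spaces of symmetric, respectively skew-symmetric, complex $N\times N$ matrices; the first $p$ entries of a tuple are symmetric and the last $q$ are skew-symmetric. (Entries of $M'_i$ in the first $l$ rows are then determined by (b) and (skew-)symmetry.) *)

(* Defs.v *)
From HB Require Import structures.
From mathcomp Require Import all_boot all_order all_algebra.
Set Implicit Arguments. Unset Strict Implicit. Unset Printing Implicit Defensive.
Import Order.TTheory GRing.Theory Num.Theory.
Local Open Scope ring_scope.

Inductive pexpr (V : Type) (R : Type) : Type :=
  | PVar of V
  | PConst of R
  | PAdd of pexpr V R & pexpr V R
  | PMul of pexpr V R & pexpr V R.

Fixpoint peval (V : Type) (R : nzRingType) (x : V -> R) (P : pexpr V R) : R :=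
  match P with
  | PVar v => x v
  | PConst c => c
  | PAdd P1 P2 => peval x P1 + peval x P2
  | PMul P1 P2 => peval x P1 * peval x P2
  end.

Definition zariski_closure (V : Type) (R : nzRingType) (S : (V -> R) -> Prop)
  : (V -> R) -> Prop :=
  fun x => forall P : pexpr V R, (forall y, S y -> peval y P = 0) -> peval x P = 0.

Definition mxtuple_coords (R : nzRingType) (s N : nat) (M : 'I_s -> 'M[R]_N)
  : ('I_s * 'I_N * 'I_N) -> R :=
  fun ijk => M ijk.1.1 ijk.1.2 ijk.2.

Definition congr_orbit (R : comUnitRingType) (s N : nat) (M : 'I_s -> 'M[R]_N)
  : (('I_s * 'I_N * 'I_N) -> R) -> Prop :=
  fun y => exists g : 'M[R]_N, g \in unitmx /\
      y = mxtuple_coords (fun i => g *m M i *m g^T).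

Definition sym_alt_tuple (R : nzRingType) (p q N : nat) (M : 'I_(p + q) -> 'M[R]_N)
  : Prop :=
  forall i : 'I_(p + q),
    if (i < p)%N then (M i)^T = M i else (M i)^T = - M i.

(* Main.v *)
Require Import Defs.
From HB Require Import structures.
From mathcomp Require Import all_boot all_order all_algebra.
From mathcomp Require Import zify ring.
From Stdlib Require Import FunctionalExtensionality.
Import Order.TTheory GRing.Theory Num.Theory.
Local Open Scope ring_scope.

Lemma divmod_uniq l (i j a b : nat) : (a < l)%N -> (b < l)%N ->
  (j * l + a == i * l + b)%N = (j == i) && (a == b).
Proof.
move=> ha hb; apply/eqP/andP => [e|[/eqP -> /eqP ->] //].
have l0 : (0 < l)%N by lia.
have e1 := congr1 (divn^~ l) e; have e2 := congr1 (modn^~ l) e.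
rewrite /= !divnMDl // !divn_small // !addn0 in e1.
rewrite /= !modnMDl !modn_small // in e2.
by rewrite e1 e2.
Qed.

Section Aux1.
Variable C : numClosedFieldType.

Lemma sum_ind_nat m (v : nat) (f : nat -> C) :
  \sum_(t < m) (((t:nat) == v)%:R * f t) = if (v < m)%N then f v else 0.
Proof.
case: ltnP => hv.
  rewrite (bigD1 (Ordinal hv)) //= eqxx mul1r big1 ?addr0 // => t /negbTE ne.
  by rewrite -val_eqE /= in ne; rewrite ne mul0r.
rewrite big1 // => t _; have: (t:nat) != v by apply/eqP => e; move: (ltn_ord t); lia.
by move/negbTE->; rewrite mul0r.
Qed.

Lemma sum_ind_ord m (v : 'I_m) (f : 'I_m -> C) :
  \sum_(t < m) (((t:nat) == v)%:R * f t) = f v.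
Proof.
rewrite (bigD1 v) //= eqxx mul1r big1 ?addr0 // => t /negbTE ne.
by rewrite -val_eqE /= in ne; rewrite ne mul0r.
Qed.

Definition Sh n a m : 'M[C]_(n, m) := \matrix_(j, k) (((j:nat) == a + k)%N)%:R.

Lemma ShTSh n a m b m' :
  (Sh n a m)^T *m Sh n b m' = \matrix_(i, j) (((a + i == b + j) && (a + i < n))%N)%:R.
Proof.
apply/matrixP => i j; rewrite !mxE.
rewrite (eq_bigr (fun t : 'I_n => (((t:nat) == a + i)%N)%:R * (((t:nat) == b + j)%N)%:R)); last first.
  by move=> t _; rewrite !mxE.
rewrite (sum_ind_nat _ _ (fun t => ((t == b + j)%N)%:R)); case: ltnP => h; rewrite ?andbT ?andbF //.
Qed.

Lemma ShSh n a m b p :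
  Sh n a m *m Sh m b p = \matrix_(j, k) ((((j:nat) == a + (b + k)) && (b + k < m))%N)%:R.
Proof.
apply/matrixP => j k; rewrite !mxE.
rewrite (eq_bigr (fun t : 'I_m => (((t:nat) == b + k)%N)%:R * (((j:nat) == a + t)%N)%:R)); last first.
  by move=> t _; rewrite !mxE mulrC.
rewrite (sum_ind_nat _ _ (fun t => (((j:nat) == a + t)%N)%:R)); case: ltnP => h; rewrite ?andbT ?andbF //.
Qed.

End Aux1.

Section Aux2.
Variable C : numClosedFieldType.

Fixpoint pe_poly {V : Type} (a z : V -> C) (P : pexpr V C) : {poly C} :=
  match P with
  | PVar v => (a v)%:P + (z v)%:P * 'X
  | PConst c => c%:P
  | PAdd P1 P2 => pe_poly a z P1 + pe_poly a z P2
  | PMul P1 P2 => pe_poly a z P1 * pe_poly a z P2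
  end.

Lemma pe_polyE V (a z : V -> C) P t :
  (pe_poly a z P).[t] = peval (fun v => a v + t * z v) P.
Proof.
elim: P => [v|c|P1 IH1 P2 IH2|P1 IH1 P2 IH2] /=.
- by rewrite hornerD hornerM hornerX !hornerC mulrC.
- by rewrite hornerC.
- by rewrite hornerD IH1 IH2.
- by rewrite hornerM IH1 IH2.
Qed.

Lemma closure_line V (S : (V -> C) -> Prop) (a z : V -> C) :
  (forall t, t != 0 -> S (fun v => a v + t * z v)) -> zariski_closure S a.
Proof.
move=> H P HP.
have Q0 : pe_poly a z P = 0.
  apply/eqP/negPn/negP => nz.
  have := max_poly_roots (rs := mkseq (fun n => n.+1%:R) (size (pe_poly a z P))) nz.
  rewrite size_mkseq ltnn => K; apply/negP: isT; apply: K.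
    apply/allP => x /mapP [n _ ->]; rewrite /root pe_polyE HP //.
    by apply: H; rewrite pnatr_eq0.
  by apply: mkseq_uniq => m n /eqP; rewrite eqr_nat eqSS => /eqP.
have := @pe_polyE V a z P 0; rewrite Q0 horner0.
have -> : (fun v => a v + 0 * z v) = a by apply: functional_extensionality => v; rewrite mul0r addr0.
by move=> <-.
Qed.

End Aux2.

Section Iso.
Variable C : numClosedFieldType.

Lemma row_freeI m n (A : 'M[C]_(m,n)) :
  (forall v : 'rV_m, v *m A = 0 -> v = 0) -> row_free A.
Proof.
move=> H; rewrite -kermx_eq0; apply/eqP/row_matrixP => i; rewrite row0.
by apply: H; apply/sub_kermxP; exact: row_sub.
Qed.

Lemma mx11_0 (X : 'M[C]_1) : X 0 0 = 0 -> X = 0.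
Proof. by move=> h; apply/matrixP => i j; rewrite !ord1 mxE. Qed.

Lemma mxDE m n (X Y : 'M[C]_(m,n)) i j : (X + Y) i j = X i j + Y i j.
Proof. by rewrite mxE. Qed.
Lemma mxZE m n a (X : 'M[C]_(m,n)) i j : (a *: X) i j = a * X i j.
Proof. by rewrite mxE. Qed.
Lemma mxNE m n (X : 'M[C]_(m,n)) i j : (- X) i j = - X i j.
Proof. by rewrite mxE. Qed.

Lemma mx0E m n i j : (0 : 'M[C]_(m,n)) i j = 0.
Proof. by rewrite mxE. Qed.

Lemma mx11_tr (X : 'M[C]_1) : X^T 0 0 = X 0 0.
Proof. by rewrite mxE. Qed.

Variable N : nat.

Lemma iso_vec (A : 'M[C]_N) : A^T = A \/ A^T = -A ->
  forall m (U : 'M_(m,N)), (1 < \rank U)%N ->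
  exists x : 'rV_N, [/\ x != 0, (x <= U)%MS & x *m A *m x^T = 0].
Proof.
move=> hA m U hr.
set B := row_base U.
have h0 : (0 < \rank U)%N by lia.
pose i0 := Ordinal h0; pose i1 := Ordinal hr.
pose y := row i0 B; pose z := row i1 B.
have indep : forall a b, a *: y + b *: z = 0 -> a = 0 /\ b = 0.
  move=> a b h.
  pose v : 'rV_(\rank U) := a *: delta_mx 0 i0 + b *: delta_mx 0 i1.
  have hv : v *m B = 0 by rewrite mulmxDl -!scalemxAl -!rowE.
  have v0 : v = 0 by apply: (row_free_inj (row_base_free U)); rewrite hv mul0mx.
  move/matrixP: v0 => v0; have := v0 0 i0; have := v0 0 i1.
  rewrite !mxE /= !mulr1 !mulr0 !addr0 !add0r => -> ->; split=> //.
have BU : (B <= U)%MS by rewrite /B eq_row_base.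
have sub : forall a b, ((a *: y + b *: z)%R <= U)%MS.
  move=> a b; apply: (submx_trans _ BU).
  by apply: addmx_sub; apply: scalemx_sub; apply: row_sub.
have ynz : y != 0.
  apply/eqP => e; have := indep 1 0; rewrite e scaler0 scale0r addr0 => /(_ erefl) [].
  by move/eqP; rewrite oner_eq0.
have znz : z != 0.
  apply/eqP => e; have := indep 0 1; rewrite e scaler0 scale0r addr0 => /(_ erefl) [].
  by move=> _ /eqP; rewrite oner_eq0.
have yU : (y <= U)%MS by apply: (submx_trans _ BU); rewrite row_sub.
have zU : (z <= U)%MS by apply: (submx_trans _ BU); rewrite row_sub.
pose q (u v : 'rV_N) := (u *m A *m v^T) 0 0.
case: hA => hA; last first.
  exists y; split => //; apply: mx11_0.
  have h : (y *m A *m y^T)^T = - (y *m A *m y^T).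
    by rewrite !trmx_mul trmxK hA mulNmx mulmxN mulmxA.
  move: h; set X := y *m A *m y^T => h.
  move/matrixP: h => /(_ 0 0); rewrite mx11_tr [RHS]mxE => h2.
  have : X 0 0 *+ 2 = 0 by rewrite mulr2n {1}h2 addNr.
  by move/eqP; rewrite mulrn_eq0 /= => /eqP.
have qsym : forall u v, q u v = q v u.
  move=> u v; rewrite /q -mx11_tr !trmx_mul trmxK hA mulmxA //.
have qlin : forall t, q (y + t *: z) (y + t *: z) = q y y + t * q y z *+ 2 + t ^+ 2 * q z z.
  move=> t; rewrite /q !(linearD, linearZ) /= !(mulmxDl, mulmxDr) -!scalemxAl.
  have := qsym z y; rewrite /q.
  set a1 := y *m A *m y^T; set a2 := z *m A *m y^T; set a3 := y *m A *m z^T; set a4 := z *m A *m z^T.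
  move=> e; rewrite !(mxDE, mxZE) e.
  by ring.
case: (eqVneq (q y y) 0) => qy0.
  by exists y; split => //; apply: mx11_0.
case: (eqVneq (q z z) 0) => qz0.
  by exists z; split => //; apply: mx11_0.
pose d := sqrtC (q y z ^+ 2 - q y y * q z z).
pose t := (d - q y z) / q z z.
exists (y + t *: z); split.
- apply/eqP => e; have [] := indep 1 t; first by rewrite scale1r.
  by move/eqP; rewrite oner_eq0.
- by rewrite -[y]scale1r sub.
- apply: mx11_0; rewrite -/(q _ _) qlin.
  have hd : d ^+ 2 = q y z ^+ 2 - q y y * q z z by rewrite sqrtCK.
  have -> : q y y + t * q y z *+ 2 + t ^+ 2 * q z z =
            (q y y * q z z + d ^+ 2 - q y z ^+ 2) / q z z.
    by rewrite /t; field.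
  by rewrite hd; apply/eqP; rewrite mulf_eq0; apply/orP; left; apply/eqP; ring.
Qed.


Lemma mx11_mul m (v : 'rV[C]_1) (x : 'M[C]_(1,m)) (e : 'cV[C]_m) :
  (v *m (x *m e)) 0 0 = v 0 0 * (x *m e) 0 0.
Proof. by rewrite [LHS]mxE big_ord1. Qed.

Lemma iso1 (A : 'M[C]_N) : A^T = A \/ A^T = -A ->
  forall k m (U : 'M_(m,N)), (k.*2 <= \rank U)%N ->
  exists W : 'M_(k,N), [/\ row_free W, (W <= U)%MS & W *m A *m W^T = 0].
Proof.
move=> hA k; elim: k => [|k IH] m U hr.
  exists 0; split; [by rewrite /row_free mxrank0 | exact: sub0mx | by rewrite !mul0mx].
have [x [xnz xU xiso]] := @iso_vec A hA m U ltac:(lia).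
have [j0 hj0] : exists j0, x 0 j0 != 0.
  case: (pickP (fun j => x 0 j != 0)) => [j0 hj|h]; first by exists j0.
  case/eqP: xnz; apply/matrixP => i j; rewrite ord1 mxE.
  by move/negbFE: (h j) => /eqP.
pose e : 'cV[C]_N := delta_mx j0 0.
have xe : (x *m e) 0 0 = x 0 j0.
  rewrite mxE (bigD1 j0) //= big1 ?addr0; first by rewrite mxE !eqxx mulr1.
  by move=> j /negbTE nj; rewrite mxE nj mulr0.
pose Fc := row_mx (A *m x^T) e.
pose U2 := (U :&: kermx Fc)%MS.
have r2 : (k.*2 <= \rank U2)%N.
  have h1 := mxrank_sum_cap U (kermx Fc).
  have h2 := rank_leq_col (U + kermx Fc)%MS.
  have h3 := mxrank_ker Fc.
  have h4 := rank_leq_col Fc.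
  rewrite /U2; lia.
have [W2 [W2free W2U2 W2iso]] := IH _ U2 r2.
have W2K : W2 *m Fc = 0 by apply/sub_kermxP; apply: (submx_trans W2U2); rewrite capmxSr.
move: W2K; rewrite mul_mx_row => /eqP; rewrite -row_mx0 => /eqP /eq_row_mx [W2Ax W2e].
exists (col_mx x W2); split.
- apply: row_freeI => v hv.
  have hv2 : lsubmx (v : 'rV_(1 + k)) *m x + rsubmx (v : 'rV_(1 + k)) *m W2 = 0.
    by rewrite -mul_row_col hsubmxK.
  have hl : lsubmx (v : 'rV_(1 + k)) = 0.
    have := congr1 (mulmx^~ e) hv2; rewrite mulmxDl mul0mx -!mulmxA W2e mulmx0 addr0.
    move/matrixP => /(_ 0 0); rewrite mx11_mul xe mx0E => /eqP; rewrite mulf_eq0 (negbTE hj0) orbF.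
    by move/eqP => h; apply/matrixP => i j; rewrite !ord1 h mxE.
  have hr' : rsubmx (v : 'rV_(1 + k)) = 0.
    apply: (row_free_inj W2free); rewrite mul0mx.
    by move: hv2; rewrite hl mul0mx add0r.
  have -> : v = row_mx (lsubmx (v : 'rV_(1 + k))) (rsubmx (v : 'rV_(1+k))) by rewrite hsubmxK.
  by rewrite hl hr' row_mx0.
- rewrite (@col_mx_sub C 1 k N x W2 m U) xU /=; apply: (submx_trans W2U2); exact: capmxSl.
- rewrite (tr_col_mx x W2) (mul_col_mx x W2).
  suff H : col_mx (x *m A) (W2 *m A) *m row_mx x^T W2^T = 0 :> 'M_(1 + k) by exact: H.
  rewrite mul_col_row W2iso xiso -[W2 *m A *m x^T]mulmxA W2Ax.
  have -> : x *m A *m W2^T = 0.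
    have -> : x *m A *m W2^T = (W2 *m (A^T *m x^T))^T.
      by rewrite !trmx_mul !trmxK.
    by case: hA => ->; rewrite ?mulNmx ?mulmxN W2Ax ?oppr0 trmx0.
  by rewrite block_mx0.
Qed.


Lemma iso_cons (A0 : 'M[C]_N) (As : seq 'M[C]_N) :
  (forall A, A \in A0 :: As -> A^T = A \/ A^T = -A) ->
  forall k m (U : 'M_(m,N)), (2 ^ (size As).+1 * k <= \rank U)%N ->
  exists W : 'M_(k,N), [/\ row_free W, (W <= U)%MS &
     forall A, A \in A0 :: As -> W *m A *m W^T = 0].
Proof.
elim: As => [|A1 As IH] hs k m U hr.
  have [W [h1 h2 h3]] := @iso1 A0 (hs A0 (mem_head _ _)) k m U ltac:(rewrite expn1 mul2n in hr; exact hr).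
  by exists W; split => // A; rewrite inE => /eqP ->.
have hs' : forall A, A \in A0 :: As -> A^T = A \/ A^T = -A.
  by move=> A; rewrite !inE => /orP [] h; apply: hs; rewrite !inE h ?orbT.
have [W1 [f1 s1 i1]] := @iso1 A1 (hs A1 ltac:(by rewrite !inE eqxx orbT))
   (2 ^ (size As).+1 * k) m U ltac:(rewrite /= expnS in hr; rewrite -mul2n; lia).
have rW1 : \rank W1 = (2 ^ (size As).+1 * k)%N by apply/eqP.
have [W [f s i]] := IH hs' k _ W1 ltac:(by rewrite rW1).
exists W; split => //; first exact: submx_trans s s1.
move=> A; rewrite !inE => /orP [/eqP ->|/orP [/eqP ->|h]].
- by apply: i; rewrite inE eqxx.
- case/submxP: s => D ->.
  have -> : D *m W1 *m A1 *m (D *m W1)^T = D *m (W1 *m A1 *m W1^T) *m D^T.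
    by rewrite trmx_mul !mulmxA.
  by rewrite i1 mulmx0 mul0mx.
- by apply: i; rewrite inE h orbT.
Qed.

End Iso.

Section D.
Variable C : numClosedFieldType.
Variable N : nat.
Lemma direct (s : nat) (V : 'M[C]_N) (B : 'I_s -> 'M[C]_N) :
  \rank (\sum_(i < s) V *m (B i)^T)%MS = (s * \rank V)%N ->
  forall v : 'I_s -> 'rV[C]_N, (forall i, (v i <= V)%MS) ->
  \sum_i v i *m (B i)^T = 0 -> forall i, v i = 0.
Proof.
move=> hr v vV hs i.
have hle : (\sum_(i < s) \rank (V *m (B i)^T) <= s * \rank V)%N.
  have -> : (s * \rank V = \sum_(j < s) \rank V)%N by rewrite sum_nat_const card_ord.
  rewrite leq_sum // => j _.
  exact: mxrankM_maxl.
have hd : mxdirect (\sum_(i < s) V *m (B i)^T)%MS.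
  by rewrite mxdirectEgeq /= hr.
have heq : (\sum_(i < s) \rank (V *m (B i)^T) = s * \rank V)%N.
  by move: hd; rewrite mxdirectE /= hr => /eqP.
have hrk : \rank (V *m (B i)^T) = \rank V.
  have := @leqif_sum _ xpredT (fun j => \rank (V *m (B j)^T) == \rank V)
     (fun j => \rank (V *m (B j)^T)) (fun _ => \rank V).
  case => [j _|_ /esym]; first by apply: leqif_eq; exact: mxrankM_maxl.
  rewrite heq sum_nat_const card_ord eqxx => /forallP /(_ i) /eqP //.
move/mxdirect_sumsP: hd => /(_ i isT) hcap.
have h1 : (v i *m (B i)^T <= V *m (B i)^T)%MS by apply: submxMr.
have h2 : (v i *m (B i)^T <= \sum_(j < s | true && (j != i)) V *m (B j)^T)%MS.
  have -> : v i *m (B i)^T = - \sum_(j < s | j != i) v j *m (B j)^T.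
    by apply/eqP; rewrite -addr_eq0; move: hs; rewrite (bigD1 i) //= => ->.
  rewrite eqmx_opp; apply: summx_sub_sums => j _; exact: submxMr.
have h0 : v i *m (B i)^T = 0.
  by apply/eqP; rewrite -submx0 -hcap sub_capmx h1 h2.
have hk : (v i <= V :&: kermx (B i)^T)%MS by rewrite sub_capmx vV; apply/sub_kermxP.
have := mxrank_mul_ker V (B i)^T; rewrite hrk => /eqP; rewrite -{2}[\rank V]addn0 eqn_add2l.
rewrite mxrank_eq0 => /eqP hz.
by apply/eqP; rewrite -submx0 -hz.
Qed.
End D.



Lemma ShTSh1 (C : numClosedFieldType) n a m : (a + m <= n)%N ->
  (Sh C n a m)^T *m Sh C n a m = 1%:M.
Proof.
move=> h; rewrite ShTSh; apply/matrixP => i j; rewrite !mxE eqn_add2l.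
have -> : (a + i < n)%N by move: (ltn_ord i); lia.
by rewrite andbT.
Qed.

Lemma ShTSh0 (C : numClosedFieldType) n a m b m' : ((a + m <= b) || (b + m' <= a))%N ->
  (Sh C n a m)^T *m Sh C n b m' = 0.
Proof.
move=> h; rewrite ShTSh; apply/matrixP => i j; rewrite !mxE.
have -> : (a + i == b + j)%N = false.
  by apply/negbTE/eqP => e; move: (ltn_ord i) (ltn_ord j); lia.
by [].
Qed.

Lemma ShE (C : numClosedFieldType) n a m j k : Sh C n a m j k = (((j:nat) == a + k)%N)%:R.
Proof. by rewrite mxE. Qed.

Lemma orbit_closure (C : numClosedFieldType) s N (M : 'I_s -> 'M[C]_N) :
  zariski_closure (congr_orbit M) (mxtuple_coords M).
Proof.
move=> P HP; apply: HP; exists 1%:M; split; first exact: unitmx1.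
congr mxtuple_coords; apply: functional_extensionality => i.
by rewrite mul1mx trmx1 mulmx1.
Qed.

Theorem corollary3p8 (C : numClosedFieldType) (p q l N : nat)
    (M : 'I_(p + q) -> 'M[C]_N) :
  sym_alt_tuple M ->
  (exists V : 'M[C]_N,
      \rank V = (2 ^ (p + q) * l)%N /\
      \rank (\sum_(i < p + q) V *m (M i)^T)%MS = ((p + q) * 2 ^ (p + q) * l)%N) ->
  exists M' : 'I_(p + q) -> 'M[C]_N,
    [/\ zariski_closure (congr_orbit M) (mxtuple_coords M'),
        sym_alt_tuple M',
        (forall (i : 'I_(p + q)) (j k : 'I_N),
            (l <= j)%N -> (l <= k)%N -> M' i j k = 0) &
        (forall (i : 'I_(p + q)) (j k : 'I_N), (k < l)%N ->
            M' i j k =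
              if ((i.+1 * l <= j)%N && (j < i.+2 * l)%N)
              then ((j - i.+1 * l)%N == k)%:R else 0)].
Proof.
move=> hsym [V [hV hS]].
case: (posnP (p + q)) => hs0.
  exists M; split; first exact: orbit_closure.
  - exact: hsym.
  - by move=> [i hi]; lia.
  - by move=> [i hi]; lia.
set s := (p + q)%N in hS hs0 *.
have hsymi : forall i, (M i)^T = M i \/ (M i)^T = - M i.
  by move=> i; have := hsym i; case: ifP => _ h; [left|right].
have [W [Wfree WV Wiso]] : exists W : 'M[C]_(l, N),
    [/\ row_free W, (W <= V)%MS & forall i, W *m M i *m W^T = 0].
  case E: [seq M i | i <- enum 'I_s] => [|A0 As].
    by move: (congr1 size E); rewrite size_map size_enum_ord /=; lia.
  have hz : size (A0 :: As) = s by rewrite -E size_map size_enum_ord.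
  have hs : forall A, A \in A0 :: As -> A^T = A \/ A^T = -A.
    by move=> A; rewrite -E => /mapP [i _ ->]; apply: hsymi.
  have hz' : (size As).+1 = (p + q)%N := hz.
  have hrk : (2 ^ (size As).+1 * l <= \rank V)%N by rewrite hV hz'.
  have [W [h1 h2 h3]] := @iso_cons C N A0 As hs l N V hrk.
  exists W; split => // i; apply: h3; rewrite -E; apply: map_f; exact: mem_enum.
have dir := @direct C N s V M ltac:(by rewrite hS hV mulnA).
have NS : ((s + 1) * l <= N)%N.
  have h1 := rank_leq_col (\sum_(i < s) V *m (M i)^T)%MS.
  rewrite hS in h1.
  have h2 : (2 <= 2 ^ s)%N by rewrite -{1}(expn1 2) leq_pexp2l.
  nia.
pose E (i : 'I_s) : 'M[C]_(l, s * l) := (Sh C (s * l) (i * l) l)^T.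
have EE : forall i j : 'I_s, E j *m (E i)^T = if j == i then 1%:M else 0.
  move=> i j; rewrite /E trmxK ShTSh; apply/matrixP => a b; rewrite !mxE.
  rewrite divmod_uniq // val_eqE; case: (eqVneq j i) => [->|ne] /=; last by rewrite mxE.
  have -> : (i * l + a < s * l)%N by move: (ltn_ord i) (ltn_ord a); nia.
  by rewrite andbT mxE.
pose Phi : 'M[C]_(N, s * l) := \sum_(i < s) M i *m W^T *m E i.
have PhiE : forall i, Phi *m (E i)^T = M i *m W^T.
  move=> i; rewrite /Phi mulmx_suml (bigD1 i) //= big1 ?addr0.
    by rewrite -mulmxA EE eqxx mulmx1.
  by move=> j /negbTE nj; rewrite -mulmxA EE nj mulmx0.
have WPhi : W *m Phi = 0.
  rewrite /Phi mulmx_sumr big1 // => i _.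
  by rewrite !mulmxA Wiso mul0mx.
have Phifull : row_full Phi.
  rewrite /row_full -mxrank_tr.
  have : row_free Phi^T; last by [].
  apply: row_freeI => v hv.
  have hvE : forall i, v *m (E i)^T = 0.
    move=> i; apply: (row_free_inj Wfree); rewrite mul0mx.
    have h1 : forall j, (v *m (E j)^T *m W <= V)%MS.
      move=> j; apply: submx_trans WV; exact: submxMl.
    have h2 : \sum_j v *m (E j)^T *m W *m (M j)^T = 0.
      move: hv; rewrite /Phi linear_sum /= mulmx_sumr => hv.
      rewrite -[RHS]hv; apply: eq_bigr => j _.
      by rewrite !trmx_mul !trmxK !mulmxA.
    exact: (dir _ h1 h2 i).
  apply/matrixP => a t; rewrite ord1 mxE.
  have ht : (t < s * l)%N := ltn_ord t.
  have l0 : (0 < l)%N by nia.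
  have hi : (t %/ l < s)%N by rewrite ltn_divLR.
  have hk : (t %% l < l)%N by rewrite ltn_mod.
  move/matrixP: (hvE (Ordinal hi)) => /(_ 0 (Ordinal hk)).
  rewrite !mxE => <-; rewrite /E trmxK.
  rewrite (eq_bigr (fun t' : 'I_(s * l) => ((t' : nat) == t)%:R * v 0 t')); last first.
    by move=> t' _; rewrite !mxE /= -divn_eq mulrC.
  by rewrite sum_ind_ord.
have [L LPhi] : exists L : 'M[C]_(s * l, N), L *m Phi = 1%:M by apply/row_fullP.
have rPhi : \rank Phi = (s * l)%N by apply/eqP.
pose K := kermx Phi.
have WK : (W <= K)%MS by apply/sub_kermxP.
pose D := (K :\: W)%MS.
pose Cb := row_base D.
have rD : (\rank D = N - s * l - l)%N.
  have h := mxrank_cap_compl K W.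
  have h2 : \rank (K :&: W)%MS = l.
    by rewrite (capmx_idPr WK); apply/eqP.
  rewrite /D; move: h; rewrite h2 /K mxrank_ker rPhi; lia.
pose Pl := Sh C N 0 l.
pose Q := Sh C N l (s * l).
pose Ph := Sh C N (l + s * l) (\rank D).
pose G := Pl *m W + Q *m L + Ph *m Cb.
have PlPl : Pl^T *m Pl = 1%:M by apply: ShTSh1; lia.
have QQ : Q^T *m Q = 1%:M by apply: ShTSh1; lia.
have PhPh : Ph^T *m Ph = 1%:M by apply: ShTSh1; rewrite rD; lia.
have PlQ : Pl^T *m Q = 0 by apply: ShTSh0; lia.
have PlPh : Pl^T *m Ph = 0 by apply: ShTSh0; lia.
have QPl : Q^T *m Pl = 0 by apply: ShTSh0; lia.
have QPh : Q^T *m Ph = 0 by apply: ShTSh0; lia.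
have PhPl : Ph^T *m Pl = 0 by apply: ShTSh0; lia.
have PhQ : Ph^T *m Q = 0 by apply: ShTSh0; lia.
have PlG : Pl^T *m G = W.
  by rewrite /G !mulmxDr !mulmxA PlPl PlQ PlPh !mul0mx mul1mx !addr0.
have QG : Q^T *m G = L.
  by rewrite /G !mulmxDr !mulmxA QPl QQ QPh !mul0mx mul1mx add0r addr0.
have PhG : Ph^T *m G = Cb.
  by rewrite /G !mulmxDr !mulmxA PhPl PhQ PhPh !mul0mx mul1mx !add0r.
have CbK : (Cb <= K)%MS by rewrite /Cb eq_row_base /D diffmxSl.
have GPhi : G *m Phi = Q.
  have CbPhi : Cb *m Phi = 0 by apply/sub_kermxP.
  by rewrite /G !mulmxDl -(mulmxA Pl) -(mulmxA Q) -(mulmxA Ph) WPhi CbPhi LPhi !mulmx0 mulmx1 add0r addr0.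
have Gunit : G \in unitmx.
  rewrite -row_full_unit -sub1mx.
  have -> : (1%:M : 'M[C]_N) = (1%:M - Phi *m L) + Phi *m L by rewrite subrK.
  apply: addmx_sub.
    have hK : (1%:M - Phi *m L <= K)%MS.
      by apply/sub_kermxP; rewrite mulmxBl mul1mx -mulmxA LPhi mulmx1 subrr.
    apply: (submx_trans hK).
    rewrite -(addsmx_diff_cap_eq K W) addsmx_sub; apply/andP; split.
      have DCb : (D <= Cb)%MS by rewrite /Cb eq_row_base.
      apply: (submx_trans DCb); rewrite -PhG; exact: submxMl.
    by apply: (submx_trans (capmxSr _ _)); rewrite -PlG submxMl.
  by apply: (submx_trans (submxMl _ _)); rewrite -QG submxMl.
have [X Xdef] : exists X : 'I_s -> 'M[C]_N, forall i, X i = G *m M i *m G^T.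
  by exists (fun i => G *m M i *m G^T).
have Xcol : forall (i : 'I_s) (j k : 'I_N), (k < l)%N -> X i j k = (((j : nat) == l + (i * l + k))%N)%:R.
  move=> i j k hk.
  have GtPl : G^T *m Pl = W^T by rewrite -PlG trmx_mul trmxK.
  have h1 : X i *m Pl = Q *m (E i)^T.
    by rewrite Xdef -mulmxA GtPl -mulmxA -PhiE mulmxA GPhi.
  move/matrixP: h1 => /(_ j (Ordinal hk)).
  rewrite /Q /E trmxK ShSh [RHS]mxE [LHS]mxE.
  rewrite (eq_bigr (fun c : 'I_N => (((c:nat) == k)%N)%:R * X i j c)); last first.
    by move=> c _; rewrite ShE add0n mulrC.
  rewrite sum_ind_ord => ->.
  have -> : (i * l + k < s * l)%N by move: (ltn_ord i); nia.
  by rewrite andbT.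
have Xtr : forall i, (X i)^T = G *m (M i)^T *m G^T.
  by move=> i; rewrite Xdef !trmx_mul trmxK mulmxA.
pose Z (v : 'I_s * 'I_N * 'I_N) :=
  if (l <= v.1.2)%N && (l <= v.2)%N then X v.1.1 v.1.2 v.2 else 0.
exists (fun i => \matrix_(j, k) (if (l <= j)%N && (l <= k)%N then 0 else X i j k)).
split.
- apply: (@closure_line C _ _ _ Z) => t tnz.
  pose c := sqrtC t.
  have c2 : c ^+ 2 = t by exact: sqrtCK.
  have cnz : c != 0.
    by apply/eqP => c0; move: tnz; rewrite -c2 c0 expr0n /= eqxx.
  pose d : 'rV[C]_N := \row_j (if (j < l)%N then c^-1 else c).
  exists (diag_mx d *m G); split.
    rewrite unitmx_mul Gunit andbT unitmxE det_diag unitfE.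
    by apply/prodf_neq0 => j _; rewrite mxE; case: ifP => _; rewrite ?invr_eq0 cnz.
  apply: functional_extensionality => [[[i j] k]]; rewrite /mxtuple_coords /=.
  rewrite trmx_mul tr_diag_mx.
  have -> : diag_mx d *m G *m M i *m (G^T *m diag_mx d) = diag_mx d *m X i *m diag_mx d.
    by rewrite Xdef !mulmxA.
  rewrite mul_mx_diag mul_diag_mx !mxE /Z /=.
  case: (ltnP j l) => hj; case: (ltnP k l) => hk.
  - rewrite /= Xcol //.
    have -> : ((j : nat) == l + (i * l + k))%N = false by apply/negbTE/eqP; lia.
    by rewrite mulr0 mulr0 !mul0r addr0.
  - rewrite /= mulr0 addr0.
    by rewrite mulrC mulrA mulfV // mul1r.
  - rewrite andbF /= mulr0 addr0.
    by rewrite mulrC mulrA mulVf // mul1r.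
  - rewrite /= add0r -c2 expr2.
    by rewrite [RHS]mulrC mulrA.
- move=> i; have := hsym i; case: ifP => _ h; apply/matrixP => j k; rewrite !mxE andbC.
    by case: ifP => // _; move/matrixP: (Xtr i) => /(_ j k); rewrite h -Xdef mxE => <-.
  case: ifP => _; first by rewrite oppr0.
  move/matrixP: (Xtr i) => /(_ j k); rewrite h mulmxN mulNmx -Xdef !mxE => ->.
  by [].
- by move=> i j k hj hk; rewrite mxE hj hk.
- move=> i j k hk; rewrite mxE (leqNgt l k) hk andbF Xcol //.
  case: (eqVneq (j : nat) (l + (i * l + k))%N) => [e|ne].
    have -> : ((i.+1 * l <= j) && (j < i.+2 * l))%N = true.
      by apply/andP; rewrite e !mulSn; split; lia.
    by rewrite e !mulSn; congr (_ %:R); apply/esym/eqP; lia.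
  case: ifP => // /andP [h1 h2].
  have -> : ((j - i.+1 * l)%N == k) = false.
    by apply/negbTE/eqP => e; move/eqP: ne; apply; rewrite !mulSn in h1 h2 e *; lia.
  by [].
Qed.
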